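(* Let $\mathbb{F}$ be algebraically closed with $\operatorname{char}\mathbb{F}\ne2$, $G$ abelian, and consider the $G$-graded algebra $\mathcal{R}=\mathfrak{F}(G,\mathcal{D},\widetilde V,\widetilde B,g_0)$ with its antiautomorphism $\varphi$. Then $\varphi$ is an involution (i.e. $\varphi^2=\mathrm{id}$) if and only if there is $\delta\in\{\pm1\}$ such that $\widetilde B$ satisfies $\widetilde B(v,u)=\mu_A\widetilde B(u,v)$ for all $A\in G/T$, $u\in\widetilde V_A$, $v\in\widetilde V_{g_0^{-1}A^{-1}}$, with $\mu_A=\delta\beta(\tau(A))$ if $g_0A^2=T$ and $\mu_A=\delta$ if $g_0A^2\ne T$; in that case $\delta=\operatorname{sgn}(\varphi)$.
   Context: $\mathcal{D}=M_\ell(\mathbb{F})$ with a division $G$-grading (nonzero homogeneous elements invertible) with support $T$, an elementary abelian 2-group, and homogeneous basis $X_t$ ($t\in T$) such that matrix transpose $\varphi_0$ satisfies $\varphi_0(X_t)=\beta(t)X_t$, $\beta(t)\in\{\pm1\}$. $g_0\in G$; $\widetilde V$ is graded by $G/T$; $\widetilde B$ a nondegenerate bilinear form with $\widetilde B(\widetilde V_A,\widetilde V_{A'})=0$ unless $g_0AA'=T$ and $\widetilde B(v,u)=\mu_A\widetilde B(u,v)$ for $u\in\widetilde V_A$, $v\in\widetilde V_{g_0^{-1}A^{-1}}$, some $\mu_A\in\mathbb{F}^\times$. Choose $\gamma(A)\in A$ with $g_0\gamma(A)\gamma(g_0^{-1}A^{-1})=e$ when $g_0A^2\neq T$; $\tau(A)=g_0\gamma(A)^2$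 when $g_0A^2=T$. $V=\bigoplus_A\widetilde V_A\otimes\mathcal{D}$ ($\tilde v\otimes d$ of degree $\gamma(A)\deg d$); $B(u,v)=\widetilde B(u,v)X_{\tau(A)}$ for $u,v\in\widetilde V_A$ with $g_0A^2=T$; $B(u,v)=\widetilde B(u,v)1$ for $u\in\widetilde V_A$, $v\in\widetilde V_{g_0^{-1}A^{-1}}$ with $g_0A^2\neq T$; zero otherwise; extended by $B(ud,vd')=\varphi_0(d)B(u,v)d'$. $\mathcal{R}$ is spanned by operators $v\otimes u:x\mapsto vB(u,x)$ and $\varphi$ is defined by $B(ru,v)=B(u,\varphi(r)v)$. Disregarding the grading, $\mathcal{R}=\mathfrak{F}_U(U)$ for a space $U$ with nondegenerate bilinear form, and an involution $\varphi$ is adjoint with respect to it; $\operatorname{sgn}(\varphi)=1$ if this form is symmetric (orthogonal involution) and $-1$ if skew-symmetric (symplectic). *)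

(* Defs.v *)
From HB Require Import structures.
From mathcomp Require Import all_boot all_order all_algebra.
Set Implicit Arguments. Unset Strict Implicit. Unset Printing Implicit Defensive.
Import GRing.Theory.
Local Open Scope ring_scope.

Section GradedDefs.
Variable F : fieldType.

Definition is_subspace (U : lmodType F) (P : {pred U}) :=
  0 \in P /\ forall (a : F) x y, x \in P -> y \in P -> a *: x + y \in P.

Definition bilin_form (U : lmodType F) (b : U -> U -> F) :=
  (forall a x y z, b (a *: x + y) z = a * b x z + b y z) /\
  (forall a x y z, b x (a *: y + z) = a * b x y + b x z).

Definition nondegen_form (U : lmodType F) (b : U -> U -> F) :=
  (forall x, (forall y, b x y = 0) -> x = 0) /\
  (forall y, (forall x, b x y = 0) -> y = 0).

(** F_U(U): the span of the operators  x |-> u b(w,x). *)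
Definition finitary_op (U : lmodType F) (b : U -> U -> F) (f : U -> U) :=
  exists s : seq (U * U), forall x, f x = \sum_(p <- s) b p.2 x *: p.1.

Variable G : zmodType.  (* abelian group, written additively *)

(** D = M_l(F) with a division G-grading with support T (given as the list Ts),
    T an elementary abelian 2-group, homogeneous basis X_t (t in T) with
    X_t^T = beta(t) X_t, beta(t) = +-1. *)
Definition division_grading (l : nat) (Ts : seq G) (X : G -> 'M[F]_l)
    (beta : G -> F) :=
  [/\ uniq Ts, 0 \in Ts,
      {in Ts &, forall s t, s + t \in Ts} &
      {in Ts, forall t, t + t = 0}] /\
  [/\ {in Ts, forall t, X t \in unitmx},
      {in Ts &, forall s t, exists c : F, X s *m X t = c *: X (s + t)},
      (forall c : G -> F, \sum_(t <- Ts) c t *: X t = 0 -> {in Ts, forall t, c t = 0}),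
      (forall d : 'M[F]_l, exists c : G -> F, d = \sum_(t <- Ts) c t *: X t) &
      {in Ts, forall t, (X t)^T = beta t *: X t /\ (beta t = 1 \/ beta t = -1)}].

(** Vt = (+)_{A in G/T} Vt_A; the component of the coset A = g + T is Vg g. *)
Definition quotient_grading (Vt : lmodType F) (Ts : seq G) (Vg : G -> {pred Vt}) :=
  [/\ (forall g, is_subspace (Vg g)),
      (forall g h, g - h \in Ts -> Vg g =i Vg h),
      (forall v, exists s : seq (G * Vt),
          all (fun p => p.2 \in Vg p.1) s /\ v = \sum_(p <- s) p.2) &
      (forall s : seq (G * Vt),
          pairwise (fun p q => p.1 - q.1 \notin Ts) s ->
          all (fun p => p.2 \in Vg p.1) s ->
          \sum_(p <- s) p.2 = 0 -> all (fun p => p.2 == 0) s)].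

Definition form_compatible (Vt : lmodType F) (Ts : seq G) (g0 : G)
    (Vg : G -> {pred Vt}) (Bt : Vt -> Vt -> F) :=
  forall g h u v, u \in Vg g -> v \in Vg h -> g0 + g + h \notin Ts -> Bt u v = 0.

Definition gamma_choice (Ts : seq G) (g0 : G) (gamma : G -> G) :=
  [/\ (forall g, gamma g - g \in Ts),
      (forall g h, g - h \in Ts -> gamma g = gamma h) &
      (forall g, g0 + g + g \notin Ts -> g0 + gamma g + gamma (- g0 - g) = 0)].

Definition tauG (g0 : G) (gamma : G -> G) (g : G) := g0 + gamma g + gamma g.

Definition Bcoef (l : nat) (Ts : seq G) (X : G -> 'M[F]_l) (g0 : G)
    (gamma : G -> G) (g : G) : 'M[F]_l :=
  if g0 + g + g \in Ts then X (tauG g0 gamma g) else 1%:M.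

Definition sym_condition (Vt : lmodType F) (Ts : seq G) (beta : G -> F) (g0 : G)
    (gamma : G -> G) (Vg : G -> {pred Vt}) (Bt : Vt -> Vt -> F) (delta : F) :=
  forall g u v, u \in Vg g -> v \in Vg (- g0 - g) ->
    Bt v u = (if g0 + g + g \in Ts then delta * beta (tauG g0 gamma g) else delta)
             * Bt u v.

(** V = Vt (x) D is identified with 'M[Vt]_l : the element  v (x) d
    corresponds to the matrix (d i j *: v)_{i,j}. *)
Variable Vt : lmodType F.
Variable l : nat.
Notation V := 'M[Vt]_l.

Definition Dract (x : V) (d : 'M[F]_l) : V :=
  \matrix_(i, k) \sum_(j < l) d j k *: x i j.

Definition Fvscale (a : F) (x : V) : V := map_mx ( *:%R a) x.

(** B on V, extended from B0 on Vt by B(ud, vd') = d^T B0(u,v) d'. *)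
Definition BformV (B0 : Vt -> Vt -> 'M[F]_l) (x y : V) : 'M[F]_l :=
  \matrix_(j, k) \sum_(i < l) \sum_(i' < l) B0 (x i j) (y i' k) i i'.

Definition rk1 (B0 : Vt -> Vt -> 'M[F]_l) (v u : V) : V -> V :=
  fun x => Dract v (BformV B0 u x).

Definition inRalg (B0 : Vt -> Vt -> 'M[F]_l) (r : V -> V) :=
  exists s : seq (V * V), forall x, r x = \sum_(p <- s) rk1 B0 p.1 p.2 x.

(** sgn(phi) = delta: disregarding the grading, R is isomorphic (as an
    F-algebra) to F_U(U) for a space U with a nondegen_form bilinear form b,
    phi becomes the adjoint with respect to b, and b(y,x) = delta b(x,y). *)
Definition sgn_is (B0 : Vt -> Vt -> 'M[F]_l) (phi : (V -> V) -> (V -> V))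
    (delta : F) :=
  exists (U : lmodType F) (b : U -> U -> F) (Psi : (V -> V) -> (U -> U)),
    [/\ bilin_form b, nondegen_form b & (forall x y, b y x = delta * b x y)] /\
    [/\ (forall r, inRalg B0 r -> finitary_op b (Psi r)),
        (forall f, finitary_op b f -> exists r, inRalg B0 r /\ forall x, Psi r x = f x) &
        (forall r r', inRalg B0 r -> inRalg B0 r' ->
           (forall x, Psi r x = Psi r' x) -> forall x, r x = r' x)] /\
    [/\ (forall r r', inRalg B0 r -> inRalg B0 r' -> forall x,
           Psi (fun v => r v + r' v) x = Psi r x + Psi r' x),
        (forall a r, inRalg B0 r -> forall x,
           Psi (fun v => Fvscale a (r v)) x = a *: Psi r x),
        (forall r r', inRalg B0 r -> inRalg B0 r' -> forall x,
           Psi (fun v => r (r' v)) x = Psi r (Psi r' x)) &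
        (forall r, inRalg B0 r -> forall x y, b (Psi r x) y = b x (Psi (phi r) y))].

End GradedDefs.

(* Main.v *)
Require Import Defs.
From HB Require Import structures.
From mathcomp Require Import all_boot all_order all_algebra.
From Stdlib Require Import Classical.
Import GRing.Theory.
Local Open Scope ring_scope.
Set Implicit Arguments. Unset Strict Implicit.

Section Main.
Variable F : fieldType.
Variable G : zmodType.
Variable l : nat.
Variable Ts : seq G.
Variable X : G -> 'M[F]_l.
Variable beta : G -> F.
Variable Vt : lmodType F.
Variable Vg : G -> {pred Vt}.
Variable Bt : Vt -> Vt -> F.
Variable g0 : G.
Variable mu : G -> F.
Variable gamma : G -> G.
Variable B0 : Vt -> Vt -> 'M[F]_l.
Hypothesis Hdg : division_grading Ts X beta.
Hypothesis Hqg : quotient_grading Ts Vg.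
Hypothesis Hbil : bilin_form Bt.
Hypothesis Hnd : nondegen_form Bt.
Hypothesis Hcomp : form_compatible Ts g0 Vg Bt.
Hypothesis Hmu0 : forall g, mu g != 0.
Hypothesis Hmu : forall g u v, u \in Vg g -> v \in Vg (- g0 - g) -> Bt v u = mu g * Bt u v.
Hypothesis Hgam : gamma_choice Ts g0 gamma.
Hypothesis HB0add : forall u1 u2 v, B0 (u1 + u2) v = B0 u1 v + B0 u2 v.
Hypothesis HB0 : forall g u v, u \in Vg g -> B0 u v = Bt u v *: Bcoef Ts X g0 gamma g.

Lemma ts0 : 0 \in Ts. Proof. by case: Hdg => -[]. Qed.
Lemma tsD s t : s \in Ts -> t \in Ts -> s + t \in Ts.
Proof. by case: Hdg => -[_ _ H _] _; apply: H. Qed.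
Lemma ts2 t : t \in Ts -> t + t = 0.
Proof. by case: Hdg => -[_ _ _ H] _; apply: H. Qed.
Lemma tsNE t : t \in Ts -> - t = t.
Proof. move=> /ts2 h; apply/eqP; rewrite eq_sym -addr_eq0; exact/eqP. Qed.
Lemma tsN t : (- t \in Ts) = (t \in Ts).
Proof.
apply/idP/idP => h; last by rewrite tsNE.
by rewrite -(opprK t) tsNE.
Qed.
Lemma Xunit t : t \in Ts -> X t \in unitmx.
Proof. by case: Hdg => _ [H _ _ _ _]; apply: H. Qed.
Lemma Xtr t : t \in Ts -> (X t)^T = beta t *: X t.
Proof. by case: Hdg => _ [_ _ _ _ H] /H []. Qed.
Lemma beta2 t : t \in Ts -> beta t * beta t = 1.
Proof. by case: Hdg => _ [_ _ _ _ H] /H [_ [->|->]]; rewrite ?mulr1 ?mulrNN ?mulr1. Qed.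
Lemma lpos : (0 < l)%N.
Proof.
case: Hdg => _ [_ _ H _ _]; case: l X H => [|n] X' H //.
have := H (fun _ => 1) _ 0 ts0.
have -> : \sum_(t <- Ts) (fun _ : G => (1:F)) t *: X' t = 0 by apply/matrixP => -[].
by move=> /(_ erefl) /eqP; rewrite oner_eq0.
Qed.

Lemma subsp g : is_subspace (Vg g).
Proof. by case: Hqg. Qed.
Lemma Vg0 g : 0 \in Vg g. Proof. by case: (subsp g). Qed.
Lemma VgZ g a u : u \in Vg g -> a *: u \in Vg g.
Proof. by move=> h; case: (subsp g) => h0 hc; rewrite -[a *: u]addr0; apply: hc. Qed.
Lemma Vg_coset g h : g - h \in Ts -> Vg g =i Vg h.
Proof. by case: Hqg => _ H _ _; apply: H. Qed.

Lemma homog_ind (P : Vt -> Prop) : P 0 -> (forall x y, P x -> P y -> P (x + y)) ->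
  (forall g u, u \in Vg g -> P u) -> forall u, P u.
Proof.
move=> P0 PD PH u; case: Hqg => _ _ H _; have [s [hs ->]] := H u.
elim: s hs => [|p s IH] /=; first by rewrite big_nil.
by move=> /andP [hp hs]; rewrite big_cons; apply: PD; [apply: PH hp | apply: IH].
Qed.

Lemma selfadd (W : zmodType) (x : W) : x = x + x -> x = 0.
Proof. by move=> h; apply: (addrI x); rewrite addr0 -h. Qed.

Lemma Bt0l v : Bt 0 v = 0.
Proof.
case: Hbil => H _; have := H 1 0 0 v; rewrite scaler0 addr0 mul1r; exact: selfadd.
Qed.
Lemma Bt0r v : Bt v 0 = 0.
Proof.
case: Hbil => _ H; have := H 1 v 0 0; rewrite scaler0 addr0 mul1r; exact: selfadd.
Qed.

Lemma B00l v : B0 0 v = 0.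
Proof. by have := HB0add 0 0 v; rewrite addr0; exact: selfadd. Qed.

Lemma B0_linr u a v w : B0 u (a *: v + w) = a *: B0 u v + B0 u w.
Proof.
move: a v w; elim/homog_ind: u.
- by move=> a v w; rewrite !B00l scaler0 addr0.
- by move=> x y IHx IHy a v w; rewrite !HB0add IHx IHy scalerDr addrACA.
- move=> g u hu a v w; rewrite !(HB0 _ hu); case: Hbil => _ ->.
  by rewrite scalerDl scalerA.
Qed.
Lemma B00r u : B0 u 0 = 0.
Proof. by have := B0_linr u 1 0 0; rewrite scaler0 addr0 scale1r; exact: selfadd. Qed.
Lemma B0_addr u v w : B0 u (v + w) = B0 u v + B0 u w.
Proof. by have := B0_linr u 1 v w; rewrite !scale1r. Qed.
Lemma B0_scaler u a v : B0 u (a *: v) = a *: B0 u v.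
Proof. by rewrite -[a *: v]addr0 B0_linr B00r addr0. Qed.
Lemma B0_scalel a u v : B0 (a *: u) v = a *: B0 u v.
Proof.
move: v; elim/homog_ind: u.
- by move=> v; rewrite scaler0 B00l scaler0.
- by move=> x y IHx IHy v; rewrite scalerDr !HB0add IHx IHy scalerDr.
- move=> g u hu v; rewrite (HB0 _ hu) (HB0 _ (VgZ a hu)) scalerA.
  case: Hbil => H _; have := H a u 0 v; rewrite addr0 Bt0l addr0 => ->; done.
Qed.

Notation C := (Bcoef Ts X g0 gamma).
Notation tau := (tauG g0 gamma).

Lemma gam_coset g h : g - h \in Ts -> gamma g = gamma h.
Proof. by case: Hgam => _ H _; apply: H. Qed.
Lemma gam_in g : gamma g - g \in Ts.
Proof. by case: Hgam => H _ _; apply: H. Qed.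

Lemma twice_eq g h : g - h \in Ts -> g + g = h + h.
Proof.
move=> /ts2 H; apply/eqP; rewrite -subr_eq0 opprD addrACA; exact/eqP.
Qed.

Lemma tau_eq g : tau g = g0 + g + g.
Proof. by rewrite /tauG -!addrA (twice_eq (gam_in g)). Qed.

Lemma tau_in g : g0 + g + g \in Ts -> tau g \in Ts.
Proof. by rewrite tau_eq. Qed.

Lemma Bcoef_coset g h : g - h \in Ts -> C g = C h.
Proof.
by move=> H; rewrite /Bcoef !tau_eq -!addrA (twice_eq H).
Qed.

Lemma opp_id g : g0 + (- g0 - g) + (- g0 - g) = - (g0 + g + g).
Proof. by rewrite (addrA g0 (-g0)) subrr add0r !opprD [LHS]addrC. Qed.

Lemma cond_opp g : (g0 + (- g0 - g) + (- g0 - g) \in Ts) = (g0 + g + g \in Ts).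
Proof.
by rewrite opp_id tsN.
Qed.

Lemma Bcoef_opp g : C (- g0 - g) = C g.
Proof.
rewrite /Bcoef cond_opp; case: ifP => // h; congr (X _); rewrite !tau_eq.
by rewrite opp_id tsNE.
Qed.

Lemma Bcoef_unit g : C g \in unitmx.
Proof. by rewrite /Bcoef; case: ifP => h; [apply: Xunit; apply: tau_in | apply: unitmx1]. Qed.

Lemma Bcoef_tr g : (C g)^T = (if g0 + g + g \in Ts then beta (tau g) else 1) *: C g.
Proof. by rewrite /Bcoef; case: ifP => h; [apply: Xtr; apply: tau_in | rewrite trmx1 scale1r]. Qed.

Definition nu (k : G -> F) g := if g0 + g + g \in Ts then k g * beta (tau g) else k g.

Lemma LB0 (k : G -> F) :
  (forall g u v, u \in Vg g -> v \in Vg (- g0 - g) -> Bt v u = k g * Bt u v) ->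
  forall g a b, a \in Vg g -> B0 b a = nu k g *: (B0 a b)^T.
Proof.
move=> Hk g a b ha; elim/homog_ind: b.
- by rewrite B00l B00r trmx0 scaler0.
- by move=> x y IHx IHy; rewrite HB0add B0_addr IHx IHy linearD /= scalerDr.
- move=> h b hb; rewrite (HB0 _ hb) (HB0 _ ha).
  have [Hin|Hout] := boolP (g0 + g + h \in Ts).
  + have Hc : h - (- g0 - g) \in Ts.
      by rewrite opprD !opprK addrC.
    have hb' : b \in Vg (- g0 - g) by rewrite -(Vg_coset Hc).
    rewrite (Bcoef_coset Hc) Bcoef_opp (Hk _ _ _ ha hb') linearZ /= Bcoef_tr /nu.
    case: ifP => hc; rewrite !scalerA; last by rewrite mulr1 mulrC.
    congr (_ *: _); rewrite -!mulrA [beta _ * (_ * _)]mulrCA beta2 ?tau_in // mulr1.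
    by rewrite mulrC.
  + rewrite (Hcomp ha hb Hout) (Hcomp hb ha) ?scale0r ?trmx0 ?scaler0 //.
    by rewrite addrAC.
Qed.

Notation V := 'M[Vt]_l.
Notation B := (BformV B0).

Lemma B0_suml (I : Type) (r : seq I) (P : pred I) (c : I -> F) (x : I -> Vt) w :
  B0 (\sum_(m <- r | P m) c m *: x m) w = \sum_(m <- r | P m) c m *: B0 (x m) w.
Proof.
apply: (big_rec2 (fun a b => B0 a w = b)); first exact: B00l.
by move=> i y1 y2 _ <-; rewrite HB0add B0_scalel.
Qed.

Lemma B0_sumr (I : Type) (r : seq I) (P : pred I) (c : I -> F) (x : I -> Vt) w :
  B0 w (\sum_(m <- r | P m) c m *: x m) = \sum_(m <- r | P m) c m *: B0 w (x m).
Proof.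
apply: (big_rec2 (fun a b => B0 w a = b)); first exact: B00r.
by move=> i y1 y2 _ <-; rewrite B0_linr.
Qed.

Lemma B_herm_gen (x u : V) (n : F) :
  (forall i j i' k, B0 (x i' k) (u i j) = n *: (B0 (u i j) (x i' k))^T) ->
  B x u = n *: (B u x)^T.
Proof.
move=> H; apply/matrixP => k j; rewrite !mxE mulr_sumr exchange_big /=.
apply: eq_bigr => i _; rewrite mulr_sumr; apply: eq_bigr => i' _.
by rewrite H !mxE.
Qed.

Lemma B_addr (x y z : V) : B x (y + z) = B x y + B x z.
Proof.
apply/matrixP => j k; rewrite !mxE -big_split /=; apply: eq_bigr => i _.
rewrite -big_split /=; apply: eq_bigr => i' _.
by rewrite !mxE B0_addr mxE.
Qed.

Lemma B_Dract_l (x y : V) d : B (Dract x d) y = d^T *m B x y.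
Proof.
apply/matrixP => j k; rewrite !mxE.
under eq_bigr => i _ do under eq_bigr => i' _ do rewrite mxE B0_suml summxE.
under [RHS]eq_bigr => m _ do rewrite !mxE mulr_sumr.
rewrite [RHS]exchange_big /=; apply: eq_bigr => i _.
under [RHS]eq_bigr => m _ do rewrite mulr_sumr.
rewrite [RHS]exchange_big /=; apply: eq_bigr => i' _.
by apply: eq_bigr => m _; rewrite mxE.
Qed.

Lemma B_Dract_r (x y : V) d : B x (Dract y d) = B x y *m d.
Proof.
apply/matrixP => j k; rewrite !mxE.
under eq_bigr => i _ do under eq_bigr => i' _ do rewrite mxE B0_sumr summxE.
under [RHS]eq_bigr => m _ do rewrite !mxE mulr_suml.
rewrite [RHS]exchange_big /=; apply: eq_bigr => i _.
under [RHS]eq_bigr => m _ do rewrite mulr_suml.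
rewrite [RHS]exchange_big /=; apply: eq_bigr => i' _.
by apply: eq_bigr => m _; rewrite mxE mulrC.
Qed.

Lemma Bt_addl x y v : Bt (x + y) v = Bt x v + Bt y v.
Proof. by case: Hbil => H _; have := H 1 x y v; rewrite scale1r mul1r. Qed.

Lemma B_nondeg_r (z : V) : (forall x, B x z = 0) -> z = 0.
Proof.
move=> H; apply/matrixP => i' k; rewrite mxE.
case: Hnd => _ Hn2; apply: Hn2 => a; move: i'.
elim/homog_ind: a.
- by move=> i'; exact: Bt0l.
- by move=> x y IHx IHy i'; rewrite Bt_addl IHx IHy addr0.
- move=> g a ha.
  pose w : 'cV[F]_l := \col_(i0 < l) Bt a (z i0 k).
  suff hw : w = 0.
    by move=> i'; have := congr1 (fun m : 'cV[F]_l => m i' ord0) hw; rewrite !mxE.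
  have hc : C g *m w = 0.
    apply/matrixP => i q; rewrite !mxE (ord1 q).
    pose xm : V := \matrix_(p, q) (if p == i then a else 0).
    have xmE p q' : xm p q' = if p == i then a else 0 by rewrite mxE.
    move: (congr1 (fun m : 'M[F]_l => m k k) (H xm)).
    rewrite !mxE (bigD1 i) //= [X in _ + X]big1 ?addr0.
      rewrite xmE eqxx => hsum; apply: (etrans _ hsum); apply: eq_bigr => j _.
      by rewrite (HB0 _ ha) !mxE mulrC.
    move=> p /negbTE hp; apply: big1 => i'' _.
    by rewrite xmE hp B00l mxE.
  by rewrite -(mulKmx (Bcoef_unit g) w) hc mulmx0.
Qed.

Lemma B_0r (x : V) : B x 0 = 0.
Proof. by apply: selfadd; rewrite -B_addr addr0. Qed.

Lemma B_oppr (x z : V) : B x (- z) = - B x z.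
Proof. by apply/eqP; rewrite -subr_eq0 opprK addrC -B_addr subrr B_0r. Qed.

Lemma B_inj_r (z1 z2 : V) : (forall x, B x z1 = B x z2) -> z1 = z2.
Proof.
move=> H; apply/eqP; rewrite -subr_eq0; apply/eqP/B_nondeg_r => x.
by rewrite B_addr B_oppr H subrr.
Qed.

Definition kap (d : F) g := if g0 + g + g \in Ts then d * beta (tau g) else d.

Lemma nu_kap d g : nu (kap d) g = d.
Proof. by rewrite /nu /kap; case: ifP => h; rewrite ?h // -mulrA beta2 ?tau_in // mulr1. Qed.

Lemma herm0 d : sym_condition Ts beta g0 gamma Vg Bt d ->
  forall a b, B0 b a = d *: (B0 a b)^T.
Proof.
move=> Hs a; elim/homog_ind: a.
- by move=> b; rewrite B00l B00r trmx0 scaler0.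
- by move=> x y IHx IHy b; rewrite B0_addr HB0add IHx IHy linearD /= scalerDr.
- move=> g a ha b.
  have Hk : forall g' u v, u \in Vg g' -> v \in Vg (- g0 - g') -> Bt v u = kap d g' * Bt u v.
    by move=> g' u v hu hv; rewrite (Hs _ _ _ hu hv).
  by rewrite (LB0 Hk b ha) nu_kap.
Qed.

Lemma B_herm d : sym_condition Ts beta g0 gamma Vg Bt d ->
  forall x y : V, B y x = d *: (B x y)^T.
Proof. by move=> Hs x y; apply: B_herm_gen => i j i' k; apply: herm0. Qed.

Lemma sign2 (d : F) : d = 1 \/ d = -1 -> d * d = 1.
Proof. by case=> ->; rewrite ?mulr1 ?mulrNN ?mulr1. Qed.

Variable phi : (V -> V) -> (V -> V).
Hypothesis Hphi : forall r, inRalg B0 r ->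
     inRalg B0 (phi r) /\ forall x y, B (r x) y = B x (phi r y).

Lemma partA d : d = 1 \/ d = -1 -> sym_condition Ts beta g0 gamma Vg Bt d ->
  forall r, inRalg B0 r -> forall x, phi (phi r) x = r x.
Proof.
move=> hd Hs r hr x; apply: B_inj_r => z.
have [hR1 hA1] := Hphi hr; have [_ hA2] := Hphi hR1.
rewrite -hA2 (B_herm Hs x) -hA1 (B_herm Hs z) linearZ /= trmxK scalerA sign2 //.
by rewrite scale1r.
Qed.

Definition diagm (a : Vt) : V := \matrix_(i, j) if i == j then a else 0.
Lemma diagmE a i j : diagm a i j = if i == j then a else 0.
Proof. by rewrite mxE. Qed.

Lemma diag_in g a : a \in Vg g -> forall i j, diagm a i j \in Vg g.
Proof. by move=> ha i j; rewrite diagmE; case: ifP => _ //; apply: Vg0. Qed.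

Lemma B_diag_herm g a x : a \in Vg g ->
  B x (diagm a) = nu mu g *: (B (diagm a) x)^T.
Proof.
move=> ha; apply: B_herm_gen => i j i' k; apply: (LB0 Hmu); exact: diag_in.
Qed.

Lemma beta_neq0 t : t \in Ts -> beta t != 0.
Proof. by move=> /beta2 h; apply/eqP => h0; move: h; rewrite h0 mul0r => /eqP; rewrite eq_sym oner_eq0. Qed.

Lemma nu_neq0 g : nu mu g != 0.
Proof. by rewrite /nu; case: ifP => h //; rewrite mulf_neq0 // beta_neq0 // tau_in. Qed.

Lemma rk1_in (v u : V) : inRalg B0 (rk1 B0 v u).
Proof. by exists [:: (v, u)] => x; rewrite big_seq1. Qed.

Lemma phi_rk1 g a v : a \in Vg g -> forall y,
  phi (rk1 B0 v (diagm a)) y = Dract (diagm a) ((nu mu g)^-1 *: B v y).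
Proof.
move=> ha y; have [_ hA] := Hphi (rk1_in v (diagm a)).
symmetry; apply: B_inj_r => x; rewrite -hA /rk1 B_Dract_l B_Dract_r (B_diag_herm _ ha).
by rewrite -scalemxAl -scalemxAr scalerA mulfV ?nu_neq0 // scale1r.
Qed.

Lemma Dract_diag b M : Dract (diagm b) M = \matrix_(i, k) (M i k *: b).
Proof.
apply/matrixP => i k; rewrite !mxE (bigD1 i) //= big1 ?addr0.
  by rewrite diagmE eqxx.
by move=> j /negbTE hj; rewrite diagmE eq_sym hj scaler0.
Qed.

Lemma pairing : (forall r, inRalg B0 r -> forall x, phi (phi r) x = r x) ->
  forall g h a b, a \in Vg g -> b \in Vg h -> a != 0 -> b != 0 ->
  nu mu g * nu mu h = 1.
Proof.
move=> Hinv g h a b ha hb a0 b0.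
set u := diagm a; set v := diagm b; set r := rk1 B0 v u.
have hr : inRalg B0 r := rk1_in v u.
have [hR1 _] := Hphi hr; have [_ hA2] := Hphi hR1.
pose c := (nu mu g)^-1 * (nu mu h)^-1.
have hss y : phi (phi r) y = Dract v (c *: B u y).
  apply: B_inj_r => x; rewrite -hA2 (phi_rk1 _ ha) B_Dract_l B_Dract_r (B_diag_herm _ hb).
  rewrite -scalemxAl -scalemxAr linearZ /= -scalemxAl scalerA; congr (_ *: _).
  by rewrite /c mulrCA mulfV ?nu_neq0 // mulr1.
have hc1 : c = 1.
  apply/eqP/negPn/negP => hc.
  have Bu0 y : B u y = 0.
    apply/matrixP => i k; rewrite mxE.
    have := congr1 (fun m : V => m i k) (hss y); rewrite Hinv // /r /rk1.
    rewrite !Dract_diag !mxE => /eqP; rewrite -subr_eq0 -scalerBl scaler_eq0 (negbTE b0) orbF.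
    by rewrite -[X in X - _]mul1r -mulrBl mulf_eq0 subr_eq0 eq_sym (negbTE hc) orFb => /eqP.
  have u0 : u = 0.
    by apply: B_nondeg_r => y; rewrite (B_diag_herm _ ha) Bu0 trmx0 scaler0.
  have i0 : 'I_l := Ordinal lpos.
  by move: a0; have := congr1 (fun m : V => m i0 i0) u0; rewrite /u diagmE eqxx mxE => ->; rewrite eqxx.
by move: hc1; rewrite /c -invfM => /eqP; rewrite invr_eq1 => /eqP.
Qed.

Lemma partB : (forall r, inRalg B0 r -> forall x, phi (phi r) x = r x) ->
  exists d : F, (d = 1 \/ d = -1) /\ sym_condition Ts beta g0 gamma Vg Bt d.
Proof.
move=> Hinv.
case: (classic (exists g a, a \in Vg g /\ a != 0)) => [[g [a [ha a0]]] | Hno].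
- exists (nu mu g); have hp := pairing Hinv ha ha a0 a0; split.
    have : nu mu g ^+ 2 == 1 by rewrite expr2 hp.
    by rewrite sqrf_eq1 => /orP [] /eqP; [left | right].
  move=> g' u v hu hv; have [->|u0] := eqVneq u 0; first by rewrite Bt0r Bt0l mulr0.
  have hp' := pairing Hinv hu ha u0 a0.
  have e : nu mu g' = nu mu g.
    by rewrite -[nu mu g']mulr1 -hp mulrA hp' mul1r.
  rewrite (Hmu hu hv) -e /nu; case: ifP => hc; rewrite ?hc //.
  by rewrite -(mulrA (mu g')) beta2 ?mulr1 // tau_in.
- exists 1; split; first by left.
  move=> g u v hu hv; have [->|u0] := eqVneq u 0; first by rewrite Bt0r Bt0l mulr0.
  by exfalso; apply: Hno; exists g, u.
Qed.

Let i0 : 'I_l := Ordinal lpos.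
Notation U := {ffun 'I_l -> Vt}.
Definition emb (c : U) : V := \matrix_(i, j) if j == i0 then c i else 0.
Definition colj (x : V) j : U := [ffun i => x i j].
Definition col0 (x : V) : U := colj x i0.
Definition bb (c c' : U) : F := B (emb c) (emb c') i0 i0.

Lemma embE c i j : emb c i j = if j == i0 then c i else 0.
Proof. by rewrite mxE. Qed.

Lemma B_emb_r (x : V) c j k :
  B x (emb c) j k = if k == i0 then \sum_i \sum_i' B0 (x i j) (c i') i i' else 0.
Proof.
rewrite mxE; case: ifP => hk.
  by apply: eq_bigr => i _; apply: eq_bigr => i' _; rewrite embE hk.
by apply: big1 => i _; apply: big1 => i' _; rewrite embE hk B00r mxE.
Qed.

Lemma bb_expand c c' : bb c c' = \sum_i \sum_i' B0 (c i) (c' i') i i'.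
Proof.
rewrite /bb B_emb_r eqxx; apply: eq_bigr => i _; apply: eq_bigr => i' _.
by rewrite embE eqxx.
Qed.

Lemma B_emb_r' (x : V) c j k :
  B x (emb c) j k = if k == i0 then bb (colj x j) c else 0.
Proof.
rewrite B_emb_r bb_expand; case: ifP => // _.
by apply: eq_bigr => i _; apply: eq_bigr => i' _; rewrite ffunE.
Qed.

Lemma col0_Dract (v : V) M : col0 (Dract v M) = \sum_j M j i0 *: colj v j.
Proof. by apply/ffunP => i; rewrite !ffunE mxE sum_ffunE; apply: eq_bigr => j _; rewrite !ffunE. Qed.

Lemma col0_Dract_emb v M : col0 (Dract (emb v) M) = M i0 i0 *: v.
Proof.
apply/ffunP => i; rewrite !ffunE mxE (bigD1 i0) //= big1 ?addr0.
  by rewrite embE eqxx.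
by move=> j /negbTE hj; rewrite embE hj scaler0.
Qed.

Lemma col0_emb c : col0 (emb c) = c.
Proof. by apply/ffunP => i; rewrite !ffunE embE eqxx. Qed.

Lemma Dract_E00 z : Dract z (delta_mx i0 i0) = emb (col0 z).
Proof.
apply/matrixP => i k; rewrite embE mxE !ffunE.
case: ifP => hk.
  rewrite (bigD1 i0) //= big1 ?addr0; first by rewrite mxE eqxx (eqP hk) eqxx scale1r.
  by move=> j /negbTE hj; rewrite mxE hj scale0r.
by apply: big1 => j _; rewrite mxE hk andbF scale0r.
Qed.

Lemma X_decomp (x : V) : x = \sum_j Dract (emb (colj x j)) (delta_mx i0 j).
Proof.
apply/matrixP => i k; rewrite summxE (bigD1 k) //= big1 ?addr0.
  rewrite mxE (bigD1 i0) //= big1 ?addr0.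
    by rewrite mxE !eqxx scale1r embE eqxx ffunE.
  by move=> j /negbTE hj; rewrite mxE hj scale0r.
move=> j /negbTE hj; rewrite mxE; apply: big1 => m _.
by rewrite mxE (eq_sym k) hj andbF scale0r.
Qed.

Lemma Dract_addl (x y : V) d : Dract (x + y) d = Dract x d + Dract y d.
Proof. by apply/matrixP => i k; rewrite !mxE -big_split; apply: eq_bigr => j _; rewrite mxE scalerDr. Qed.
Lemma Dract_addr (v : V) M N : Dract v (M + N) = Dract v M + Dract v N.
Proof. by apply/matrixP => i k; rewrite !mxE -big_split; apply: eq_bigr => j _; rewrite mxE scalerDl. Qed.
Lemma Dract0l d : Dract (0 : V) d = 0.
Proof. by apply/matrixP => i k; rewrite !mxE big1 // => j _; rewrite mxE scaler0. Qed.
Lemma Dract0r (v : V) : Dract v 0 = 0.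
Proof. by apply/matrixP => i k; rewrite !mxE big1 // => j _; rewrite mxE scale0r. Qed.

Lemma Dract_suml (I : Type) (s : seq I) (f : I -> V) d :
  Dract (\sum_(p <- s) f p) d = \sum_(p <- s) Dract (f p) d.
Proof.
apply: (big_rec2 (fun a b => Dract a d = b)); first exact: Dract0l.
by move=> i y1 y2 _ <-; rewrite Dract_addl.
Qed.

Lemma Dract_mul (v : V) M N : Dract (Dract v M) N = Dract v (M *m N).
Proof.
apply/matrixP => i k; rewrite !mxE.
under eq_bigr => j _ do rewrite mxE scaler_sumr.
rewrite exchange_big /=; apply: eq_bigr => m _.
by rewrite mxE scaler_suml; apply: eq_bigr => j _; rewrite scalerA mulrC.
Qed.

Lemma R_Dract r y d : inRalg B0 r -> r (Dract y d) = Dract (r y) d.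
Proof.
case=> s hs; rewrite !hs Dract_suml; apply: eq_bigr => p _.
by rewrite /rk1 B_Dract_r Dract_mul.
Qed.

Lemma R_add r x y : inRalg B0 r -> r (x + y) = r x + r y.
Proof.
case=> s hs; rewrite !hs -big_split; apply: eq_bigr => p _.
by rewrite /rk1 B_addr Dract_addr.
Qed.

Lemma R_0 r : inRalg B0 r -> r 0 = 0.
Proof. by case=> s hs; rewrite hs big1 // => p _; rewrite /rk1 B_0r Dract0r. Qed.

Lemma R_sum r (f : 'I_l -> V) : inRalg B0 r -> r (\sum_j f j) = \sum_j r (f j).
Proof.
move=> hr; apply: (big_rec2 (fun a b => r a = b)); first exact: R_0.
by move=> i y1 y2 _ <-; rewrite R_add.
Qed.

Lemma R_emb r c : inRalg B0 r -> r (emb c) = emb (col0 (r (emb c))).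
Proof.
move=> hr; have e : emb c = Dract (emb c) (delta_mx i0 i0) by rewrite Dract_E00 col0_emb.
by rewrite {1}e R_Dract // Dract_E00.
Qed.

Lemma col0_sum (I : Type) (s : seq I) (f : I -> V) :
  col0 (\sum_(p <- s) f p) = \sum_(p <- s) col0 (f p).
Proof. by apply/ffunP => i; rewrite !ffunE summxE sum_ffunE; apply: eq_bigr => p _; rewrite ffunE. Qed.

Lemma bb_bilin : bilin_form bb.
Proof.
split=> a x y z; rewrite !bb_expand mulr_sumr -big_split; apply: eq_bigr => i _;
  rewrite mulr_sumr -big_split; apply: eq_bigr => i' _ /=.
  by rewrite !ffunE HB0add B0_scalel !mxE.
by rewrite !ffunE B0_linr !mxE.
Qed.

Lemma bb_sym d : sym_condition Ts beta g0 gamma Vg Bt d ->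
  forall x y, bb y x = d * bb x y.
Proof. by move=> Hs x y; rewrite /bb (B_herm Hs (emb x) (emb y)) !mxE. Qed.

Lemma bb_nd_r y : (forall x, bb x y = 0) -> y = 0.
Proof.
move=> H; have e : emb y = 0.
  apply: B_nondeg_r => x; apply/matrixP => j k; rewrite B_emb_r' mxE.
  by case: ifP => // _; rewrite H.
by rewrite -(col0_emb y) e; apply/ffunP => i; rewrite !ffunE mxE.
Qed.

Lemma bb_nd d : sym_condition Ts beta g0 gamma Vg Bt d -> nondegen_form bb.
Proof.
move=> Hs; split; last exact: bb_nd_r.
by move=> x H; apply: bb_nd_r => y; rewrite (bb_sym Hs) H mulr0.
Qed.

Definition Psi (r : V -> V) : U -> U := fun c => col0 (r (emb c)).

Lemma Psi_fin r : inRalg B0 r -> finitary_op bb (Psi r).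
Proof.
case=> s hs; exists [seq (colj p.1 j, colj p.2 j) | p <- s, j <- index_enum 'I_l] => c.
rewrite big_allpairs_dep /= /Psi hs col0_sum; apply: eq_bigr => p _.
rewrite /rk1 col0_Dract; apply: eq_bigr => j _.
by rewrite B_emb_r' eqxx.
Qed.

Lemma Psi_surj f : finitary_op bb f -> exists r, inRalg B0 r /\ forall x, Psi r x = f x.
Proof.
case=> s hs; exists (fun x => \sum_(p <- s) rk1 B0 (emb p.1) (emb p.2) x); split.
  by exists [seq (emb p.1, emb p.2) | p <- s] => x; rewrite big_map.
move=> c; rewrite hs /Psi col0_sum; apply: eq_bigr => p _.
by rewrite /rk1 col0_Dract_emb.
Qed.

Lemma Psi_inj r r' : inRalg B0 r -> inRalg B0 r' ->
  (forall x, Psi r x = Psi r' x) -> forall x, r x = r' x.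
Proof.
move=> hr hr' H x; rewrite (X_decomp x) !R_sum //; apply: eq_bigr => j _.
by rewrite !R_Dract // (R_emb _ hr) (R_emb _ hr') /Psi in H *; rewrite H.
Qed.

Lemma partC d : sym_condition Ts beta g0 gamma Vg Bt d -> sgn_is B0 phi d.
Proof.
move=> Hs; exists U, bb, Psi; split; [|split].
- by split; [exact: bb_bilin | exact: (bb_nd Hs) | exact: (bb_sym Hs)].
- by split; [exact: Psi_fin | exact: Psi_surj | exact: Psi_inj].
split.
- by move=> r r' _ _ x; apply/ffunP => i; rewrite /Psi !ffunE mxE.
- by move=> a r _ x; apply/ffunP => i; rewrite /Psi !ffunE mxE.
- by move=> r r' _ hr' x; rewrite /Psi (R_emb x hr') col0_emb.
- move=> r hr x y; have [hR1 hA] := Hphi hr.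
  by rewrite /bb /Psi -(R_emb _ hr) -(R_emb _ hR1) hA.
Qed.

Lemma main_sec :
  ((forall r, inRalg B0 r -> forall x, phi (phi r) x = r x) <->
     exists delta : F, (delta = 1 \/ delta = -1) /\
       sym_condition Ts beta g0 gamma Vg Bt delta)
  /\ (forall delta : F, (delta = 1 \/ delta = -1) ->
        sym_condition Ts beta g0 gamma Vg Bt delta -> sgn_is B0 phi delta).
Proof.
split; last by move=> d _; exact: partC.
split; first exact: partB.
by case=> d [hd Hs]; exact: partA hd Hs.
Qed.
End Main.

Theorem proposition3p21 (F : closedFieldType) (G : zmodType) (l : nat)
    (Ts : seq G) (X : G -> 'M[F]_l) (beta : G -> F)
    (Vt : lmodType F) (Vg : G -> {pred Vt}) (Bt : Vt -> Vt -> F) (g0 : G)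
    (mu : G -> F) (gamma : G -> G) (B0 : Vt -> Vt -> 'M[F]_l)
    (phi : ('M[Vt]_l -> 'M[Vt]_l) -> ('M[Vt]_l -> 'M[Vt]_l)) :
  (2%:R : F) != 0 ->
  division_grading Ts X beta ->
  quotient_grading Ts Vg ->
  bilin_form Bt -> nondegen_form Bt ->
  form_compatible Ts g0 Vg Bt ->
  (forall g, mu g != 0) ->
  (forall g u v, u \in Vg g -> v \in Vg (- g0 - g) -> Bt v u = mu g * Bt u v) ->
  gamma_choice Ts g0 gamma ->
  (* B0 : Vt x Vt -> D is the D-valued form defining B on V *)
  (forall u1 u2 v, B0 (u1 + u2) v = B0 u1 v + B0 u2 v) ->
  (forall g u v, u \in Vg g -> B0 u v = Bt u v *: Bcoef Ts X g0 gamma g) ->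
  (* phi is defined by B(ru, v) = B(u, phi(r) v) on R *)
  (forall r, inRalg B0 r ->
     inRalg B0 (phi r) /\ forall x y, BformV B0 (r x) y = BformV B0 x (phi r y)) ->
  ((forall r, inRalg B0 r -> forall x, phi (phi r) x = r x) <->
     exists delta : F, (delta = 1 \/ delta = -1) /\
       sym_condition Ts beta g0 gamma Vg Bt delta)
  /\ (forall delta : F, (delta = 1 \/ delta = -1) ->
        sym_condition Ts beta g0 gamma Vg Bt delta -> sgn_is B0 phi delta).
Proof.
move=> _ Hdg Hqg Hbil Hnd Hcomp Hmu0 Hmu Hgam HB0add HB0 Hphi.
exact: (main_sec Hdg Hqg Hbil Hnd Hcomp Hmu0 Hmu Hgam HB0add HB0 Hphi).
Qed.
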